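(* Let $\mathsf{\Sigma}\in\mathbb{R}^{N\times N_S}$ and $\mathsf{\Lambda}\in\mathbb{R}^{N\times N_L}$ be the Star-to-RWG and Loop-to-RWG matrices of a triangular surface mesh, and let $\mathsf{\Sigma}_n=\mathsf{\Sigma}(\mathsf{\Sigma}^{\mathrm T}\mathsf{\Sigma})^+(\mathsf{\Sigma}^{\mathrm T}\mathsf{\Sigma})_n$ and $\mathsf{\Lambda}_n=\mathsf{\Lambda}(\mathsf{\Lambda}^{\mathrm T}\mathsf{\Lambda})^+(\mathsf{\Lambda}^{\mathrm T}\mathsf{\Lambda})_n$ be the filtered Star and Loop matrices (see context). Then for all $1\le n,m\le N_S$, $$\mathsf{\Sigma}_m^{\mathrm T}\mathsf{\Sigma}_n=\mathsf{\Sigma}_{\min\{n,m\}}^{\mathrm T}\mathsf{\Sigma}_{\min\{n,m\}},$$ and for all $1\le n,m\le N_L$, $$\mathsf{\Lambda}_m^{\mathrm T}\mathsf{\Lambda}_n=\mathsf{\Lambda}_{\min\{n,m\}}^{\mathrm T}\mathsf{\Lambda}_{\min\{n,m\}}.$$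
   Context: Consider a closed triangulated surface with $N$ edges, $N_S$ triangles and $N_L$ vertices. Each edge $m$ is shared by two triangles $c_m^+$, $c_m^-$. $[\mathsf{\Sigma}]_{mn}=1$ if cell $n$ is $c_m^+$, $-1$ if cell $n$ is $c_m^-$, $0$ otherwise. $[\mathsf{\Lambda}]_{mn}=\pm1$ when vertex $n$ is an endpoint of edge $m$ (opposite signs for the two endpoints, fixed by the orientation convention), $0$ otherwise. $^+$ denotes the Moore–Penrose pseudo-inverse. For $\mathsf{X}\in\{\mathsf{\Sigma},\mathsf{\Lambda}\}$ with $N_x$ columns, fix an SVD $\mathsf{X}=\mathsf{U}_X\mathsf{S}_X\mathsf{V}_X^{\mathrm T}$ with $\mathsf{V}_X$ orthogonal $N_x\times N_x$ and singular values $\sigma_{X,1}\ge\dots\ge\sigma_{X,N_x}\ge0$, so $\mathsf{X}^{\mathrm T}\mathsf{X}=\mathsf{V}_X\mathrm{diag}(\sigma_{X,i}^2)\mathsf{V}_X^{\mathrm T}$. For $1\le n\le N_x$, $\mathsf{L}_{X,n}$ is diagonal with $[\mathsf{L}_{X,n}]_{ii}=\sigma_{X,i}$ if $i>N_x-n$ and $0$ otherwise, and $(\mathsf{X}^{\mathrm T}\mathsf{X})_n=\mathsf{V}_X\mathsf{L}_{X,n}^2\mathsf{V}_X^{\mathrm T}$ (filtered graph Laplacian). *)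

(* Defs.v *)
From HB Require Import structures.
From mathcomp Require Import all_boot all_order all_algebra.
From mathcomp Require Import reals.
Set Implicit Arguments. Unset Strict Implicit. Unset Printing Implicit Defensive.
Import Order.TTheory GRing.Theory Num.Theory.
Local Open Scope ring_scope.

(* Combinatorial data of a closed triangulated surface mesh with
   N edges (indexed by 'I_N), NS triangles ('I_NS), NL vertices ('I_NL). *)
Record mesh (N NS NL : nat) := Mesh {
  (* the two triangles c_m^+ and c_m^- sharing edge m *)
  cplus  : 'I_N -> 'I_NS;
  cminus : 'I_N -> 'I_NS;
  cplus_neq_cminus : forall m, cplus m != cminus m;
  (* the two endpoints of edge m: vplus gets entry +1, vminus gets -1
     in the Loop-to-RWG matrix (orientation convention) *)
  vplus  : 'I_N -> 'I_NL;
  vminus : 'I_N -> 'I_NL;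
  vplus_neq_vminus : forall m, vplus m != vminus m;
  triangle_three_edges : forall c : 'I_NS,
    #|[set m : 'I_N | (cplus m == c) || (cminus m == c)]| = 3%N;
  vertex_used : forall v : 'I_NL, exists m, (vplus m == v) || (vminus m == v)
}.

Section Mats.
Variable R : realType.

Definition star_mx N NS NL (M : mesh N NS NL) : 'M[R]_(N, NS) :=
  \matrix_(m < N, n < NS)
    (if n == cplus M m then 1 else if n == cminus M m then -1 else 0).

Definition loop_mx N NS NL (M : mesh N NS NL) : 'M[R]_(N, NL) :=
  \matrix_(m < N, n < NL)
    (if n == vplus M m then 1 else if n == vminus M m then -1 else 0).

Definition is_MP_pinv p q (A : 'M[R]_(p, q)) (P : 'M[R]_(q, p)) : Prop :=
  [/\ A *m P *m A = A, P *m A *m P = P,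
      (A *m P)^T = A *m P & (P *m A)^T = P *m A].

Definition is_svd_V p q (X : 'M[R]_(p, q)) (V : 'M[R]_q) (sigma : 'I_q -> R)
  : Prop :=
  [/\ V^T *m V = 1%:M, V *m V^T = 1%:M,
      X^T *m X = V *m diag_mx (\row_i (sigma i ^+ 2)) *m V^T,
      (forall i, 0 <= sigma i) &
      (forall i j : 'I_q, (i <= j)%N -> sigma j <= sigma i)].

(* L_{X,n}: [L]_{ii} = sigma_i if i > Nx - n (1-based), i.e. Nx - n <= i
   with 0-based i; 0 otherwise *)
Definition Lfilt q (sigma : 'I_q -> R) (n : nat) : 'M[R]_q :=
  diag_mx (\row_(i < q) (if (q - n <= i)%N then sigma i else 0)).

(* filtered graph Laplacian (X^T X)_n = V L_n^2 V^T *)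
Definition filt_lap q (V : 'M[R]_q) (sigma : 'I_q -> R) (n : nat) : 'M[R]_q :=
  V *m (Lfilt sigma n *m Lfilt sigma n) *m V^T.

(* filtered matrix X_n = X (X^T X)^+ (X^T X)_n, with P = (X^T X)^+ *)
Definition filt_mx p q (X : 'M[R]_(p, q)) (P : 'M[R]_q) (V : 'M[R]_q)
  (sigma : 'I_q -> R) (n : nat) : 'M[R]_(p, q) :=
  X *m P *m filt_lap V sigma n.

End Mats.

(* Main.v *)
Require Import Defs.
From HB Require Import structures.
From mathcomp Require Import all_boot all_order all_algebra.
From mathcomp Require Import reals.
From mathcomp Require Import zify.
Import Order.TTheory GRing.Theory Num.Theory.
Local Open Scope ring_scope.


Section Gen.
Variable R : realType.

Definition Mk q (k : nat) : 'M[R]_q :=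
  diag_mx (\row_(i < q) (if (q - k <= i)%N then 1 else 0)).

Lemma filt_gen p q (X : 'M[R]_(p, q)) (P V : 'M[R]_q) (sigma : 'I_q -> R) :
  is_MP_pinv (X^T *m X) P -> is_svd_V X V sigma ->
  forall n m : nat,
  (filt_mx X P V sigma m)^T *m filt_mx X P V sigma n
  = (filt_mx X P V sigma (minn n m))^T *m filt_mx X P V sigma (minn n m).
Proof.
move=> [hAPA _ hAPs _] [hVV hVV' hA _ _].
set A := X^T *m X in hAPA hAPs hA *.
set D := diag_mx (\row_i (sigma i ^+ 2)) in hA.
have AT : A^T = A by rewrite /A trmx_mul trmxK.
have hXA : X^T *m X = A by [].
clearbody A.
have LL k : Lfilt sigma k *m Lfilt sigma k = Mk q k *m D.
  rewrite /Lfilt /Mk /D !mulmx_diag; congr diag_mx; apply/rowP => i.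
  by rewrite !mxE; case: ifP => _; rewrite ?mul1r ?mul0r ?mulr0 // expr2.
have LL' k : Lfilt sigma k *m Lfilt sigma k = D *m Mk q k.
  by rewrite LL /Mk /D !mulmx_diag; congr diag_mx; apply/rowP => i; rewrite !mxE mulrC.
set E := fun k => V *m Mk q k *m V^T.
have FEA k : filt_lap V sigma k = E k *m A.
  rewrite /filt_lap LL hA /E !mulmxA; congr (_ *m _).
  by rewrite -!mulmxA; congr (_ *m _); rewrite (mulmxA V^T) hVV mul1mx.
have FAE k : filt_lap V sigma k = A *m E k.
  rewrite /filt_lap LL' hA /E !mulmxA; congr (_ *m _); congr (_ *m _).
  by rewrite -!mulmxA; congr (_ *m _); rewrite hVV mulmx1.
have ET k : (E k)^T = E k by rewrite /E !trmx_mul trmxK /Mk tr_diag_mx mulmxA.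
have key n m : (filt_mx X P V sigma m)^T *m filt_mx X P V sigma n
   = V *m (Mk q m *m D *m Mk q n) *m V^T.
  have FmT : (filt_lap V sigma m)^T = E m *m A by rewrite FAE trmx_mul ET AT.
  rewrite /filt_mx (trmx_mul (X *m P)) FmT (trmx_mul X).
  have -> : filt_lap V sigma n = A *m E n by rewrite FAE.
  have h1 : A *m P^T *m A = A by have := congr1 trmx hAPA; rewrite !trmx_mul AT mulmxA.
  have -> : E m *m A *m (P^T *m X^T) *m (X *m P *m (A *m E n))
      = E m *m (A *m P^T *m A) *m P *m A *m E n by rewrite !mulmxA -(mulmxA _ X^T) hXA.
  rewrite h1 -(mulmxA (E m *m A) P A) -(mulmxA (E m) A (P *m A)) (mulmxA A P A) hAPA.
  rewrite /E hA !mulmxA; congr (_ *m _).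
  rewrite -!mulmxA; congr (_ *m _).
  by rewrite (mulmxA V^T V) hVV mul1mx (mulmxA V^T V) hVV mul1mx.
move=> n m; rewrite !key; congr (_ *m _ *m _).
rewrite /Mk /D !mulmx_diag; congr diag_mx; apply/rowP => i; rewrite !mxE.
have -> : (q - minn n m <= i)%N = (q - m <= i)%N && (q - n <= i)%N.
  by apply/idP/andP; [move=> h; split; lia | case; lia].
by case: (q - n <= i)%N; case: (q - m <= i)%N; rewrite /= ?mul1r ?mulr1 ?mul0r ?mulr0.
Qed.
End Gen.

Theorem mainTheorem2 (R : realType) (N NS NL : nat) (M : mesh N NS NL)
  (PS VS : 'M[R]_NS) (sigS : 'I_NS -> R)
  (PL VL : 'M[R]_NL) (sigL : 'I_NL -> R) :
  is_MP_pinv ((star_mx R M)^T *m star_mx R M) PS ->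
  is_svd_V (star_mx R M) VS sigS ->
  is_MP_pinv ((loop_mx R M)^T *m loop_mx R M) PL ->
  is_svd_V (loop_mx R M) VL sigL ->
  (forall n m : nat, (1 <= n <= NS)%N -> (1 <= m <= NS)%N ->
     (filt_mx (star_mx R M) PS VS sigS m)^T *m filt_mx (star_mx R M) PS VS sigS n
     = (filt_mx (star_mx R M) PS VS sigS (minn n m))^T
         *m filt_mx (star_mx R M) PS VS sigS (minn n m)) /\
  (forall n m : nat, (1 <= n <= NL)%N -> (1 <= m <= NL)%N ->
     (filt_mx (loop_mx R M) PL VL sigL m)^T *m filt_mx (loop_mx R M) PL VL sigL n
     = (filt_mx (loop_mx R M) PL VL sigL (minn n m))^T
         *m filt_mx (loop_mx R M) PL VL sigL (minn n m)).
Proof.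
Proof.
move=> h1 h2 h3 h4; split=> n m _ _; [exact: (@filt_gen _ _ _ _ _ _ _ h1 h2 n m) | exact: (@filt_gen _ _ _ _ _ _ _ h3 h4 n m)].
Qed.
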